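(* Let $s\in\mathbb{R}$ and let $f:\mathbb{R}^n\to(-\infty,\infty]$ be lsc and variationally $s$-convex at $\bar x\in\operatorname{dom}f$ for $\bar x^*\in\partial f(\bar x)$. Then for every $t\in\mathbb{R}$ and every $y^*\in\mathbb{R}^n$ the function $\psi:=f+\langle y^*,\cdot-\bar x\rangle+\frac t2\|\cdot-\bar x\|^2$ is variationally $(s+t)$-convex at $\bar x$ for $\bar x^*+y^*$. Moreover, if $\widehat f$, $U$, $V$, $\rho$ are an lsc function, open convex neighborhood and number certifying variational $s$-convexity of $f$ at $\bar x$ for $\bar x^*$ (as in the definition), then variational $(s+t)$-convexity of $\psi$ at $\bar x$ for $\bar x^*+y^*$ can be certified by the function $\widehat\psi:=\widehat f+\langle y^*,\cdot-\bar x\rangle+\frac t2\|\cdot-\bar x\|^2$ together with a suitable open convex neighborhood $\widehat U\times\widehat V$ of $(\bar x,\bar x^*+y^* )$ and some $\widehat\rho>\psi(\bar x)=f(\bar x)$.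
   Context: Limiting subdifferential $\partial f(x)$: all $x^*$ with $x_k\to x$, $f(x_k)\to f(x)$, $x_k^*\to x^*$, $x_k^*\in\widehat\partial f(x_k)$, where $\widehat\partial f(x)=\{x^*\mid\liminf_{y\to x}\frac{f(y)-f(x)-\langle x^*,y-x\rangle}{\|y-x\|}\ge0\}$. $\operatorname{gph}_\rho\partial f=\{(x,x^* )\in\operatorname{gph}\partial f\mid f(x)<\rho\}$. An lsc function $f$ is variationally $s$-convex at $\bar x\in\operatorname{dom}f$ for $\bar x^*\in\partial f(\bar x)$ if there exist an open convex neighborhood $U\times V$ of $(\bar x,\bar x^* )$, an lsc function $\widehat f$ and $\rho>f(\bar x)$ such that $\widehat f-\frac s2\|\cdot\|^2$ is convex on $U$, $\widehat f\le f$ on $U$, $\operatorname{gph}_\rho\partial f\cap(U\times V)=\operatorname{gph}\partial\widehat f\cap(U\times V)$ and $f(x)=\widehat f(x)$ at the common elements $(x,x^* )$; such $\widehat f,U,V,\rho$ are said to certify the property. *)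

(* Defs.v *)
(* R^n is modelled by row vectors 'rV[R]_n
   over an arbitrary R : realType; extended values (-oo,+oo] by \bar R. *)
From HB Require Import structures.
From mathcomp Require Import all_boot all_order all_algebra.
From mathcomp Require Import all_classical all_reals all_analysis.
Set Implicit Arguments. Unset Strict Implicit. Unset Printing Implicit Defensive.
Import Order.TTheory GRing.Theory Num.Theory.
Import numFieldNormedType.Exports.
Local Open Scope classical_set_scope.
Local Open Scope ring_scope.

Section Defs.
Variables (R : realType) (n : nat).
Local Notation V := 'rV[R]_n.

Definition dotv (u v : V) : R := \sum_(i < n) u ord0 i * v ord0 i.
Definition enorm (u : V) : R := Num.sqrt (dotv u u).

Definition ext_fun (f : V -> \bar R) := forall x, f x != -oo%E.

Definition lsc (f : V -> \bar R) :=
  forall x (a : R), (a%:E < f x)%E ->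
    exists2 d : R, 0 < d & forall y, enorm (y - x) < d -> (a%:E < f y)%E.

(* Frechet (regular) subdifferential: f x finite and
   liminf_{y -> x} (f y - f x - <x*, y - x>) / ||y - x|| >= 0 *)
Definition frechet_subdiff (f : V -> \bar R) (x xs : V) :=
  f x \is a fin_num /\
  forall e : R, 0 < e -> exists2 d : R, 0 < d & forall y,
    0 < enorm (y - x) < d ->
    ((fine (f x) + dotv xs (y - x) - e * enorm (y - x))%:E <= f y)%E.

Definition lim_subdiff (f : V -> \bar R) (x xs : V) :=
  exists (xk xks : nat -> V),
    [/\ xk @ \oo --> x, (fun k => f (xk k)) @ \oo --> f x,
        xks @ \oo --> xs & forall k, frechet_subdiff f (xk k) (xks k)].

Definition convex_setv (U : set V) :=
  forall x y (l : R), U x -> U y -> 0 <= l <= 1 -> U (l *: x + (1 - l) *: y).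

Definition convex_on (U : set V) (g : V -> \bar R) :=
  forall x y (l : R), U x -> U y -> 0 < l < 1 ->
    let z := l *: x + (1 - l) *: y in
    (g z <= l%:E * g x + (1 - l)%:E * g y)%E.

Definition certifies (f : V -> \bar R) (s : R) (xb xbs : V)
    (fh : V -> \bar R) (U W : set V) (rho : R) :=
  [/\ open U /\ convex_setv U /\ U xb,
      open W /\ convex_setv W /\ W xbs,
      ext_fun fh /\ lsc fh,
      (f xb < rho%:E)%E &
      [/\ convex_on U (fun x => fh x - (s / 2 * enorm x ^+ 2)%:E)%E,
      (forall x, U x -> (fh x <= f x)%E),
      (forall x xs, U x -> W xs ->
         (lim_subdiff f x xs /\ (f x < rho%:E)%E) <-> lim_subdiff fh x xs) &
      (forall x xs, U x -> W xs -> lim_subdiff f x xs -> (f x < rho%:E)%E ->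
         lim_subdiff fh x xs -> f x = fh x)]].

Definition var_convex (f : V -> \bar R) (s : R) (xb xbs : V) :=
  [/\ (f xb < +oo)%E, lim_subdiff f xb xbs &
      exists fh U W rho, certifies f s xb xbs fh U W rho].

Definition tilt (g : V -> \bar R) (ys xb : V) (t : R) : V -> \bar R :=
  fun x => (g x + (dotv ys (x - xb) + t / 2 * enorm (x - xb) ^+ 2)%:E)%E.

End Defs.

(* Main.v *)
Require Import Defs.
From HB Require Import structures.
From mathcomp Require Import all_boot all_order all_algebra.
From mathcomp Require Import all_classical all_reals all_analysis.
From mathcomp Require Import ring lra.
Import Order.TTheory GRing.Theory Num.Theory.
Import numFieldNormedType.Exports.
Local Open Scope classical_set_scope.
Local Open Scope ring_scope.



Section Helpers.
Context {R : realType} {n : nat}.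
Local Notation V := 'rV[R]_n.
Implicit Types (u v w : V).

Lemma dotvC u v : dotv u v = dotv v u.
Proof. by apply: eq_bigr => i _; rewrite mulrC. Qed.
Lemma dotvDl u v w : dotv (u + v) w = dotv u w + dotv v w.
Proof. by rewrite /dotv -big_split; apply: eq_bigr => i _; rewrite !mxE mulrDl. Qed.
Lemma dotvDr u v w : dotv w (u + v) = dotv w u + dotv w v.
Proof. by rewrite dotvC dotvDl !(dotvC w). Qed.
Lemma dotvZl (a : R) u v : dotv (a *: u) v = a * dotv u v.
Proof. by rewrite /dotv mulr_sumr; apply: eq_bigr => i _; rewrite !mxE mulrA. Qed.
Lemma dotvZr (a : R) u v : dotv v (a *: u) = a * dotv v u.
Proof. by rewrite dotvC dotvZl dotvC. Qed.
Lemma dotvNl u v : dotv (- u) v = - dotv u v.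
Proof. by rewrite -scaleN1r dotvZl mulN1r. Qed.
Lemma dotvNr u v : dotv v (- u) = - dotv v u.
Proof. by rewrite dotvC dotvNl dotvC. Qed.
Lemma dotvBl u v w : dotv (u - v) w = dotv u w - dotv v w.
Proof. by rewrite dotvDl dotvNl. Qed.
Lemma dotvBr u v w : dotv w (u - v) = dotv w u - dotv w v.
Proof. by rewrite dotvDr dotvNr. Qed.
Lemma dotv0l v : dotv 0 v = 0.
Proof. by rewrite -(scale0r (0:V)) dotvZl mul0r. Qed.
Lemma dotv0r v : dotv v 0 = 0.
Proof. by rewrite dotvC dotv0l. Qed.
Lemma dotv_ge0 v : 0 <= dotv v v.
Proof. by apply: sumr_ge0 => i _; rewrite -expr2 sqr_ge0. Qed.
Lemma enorm_sq v : enorm v ^+ 2 = dotv v v.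
Proof. by rewrite /enorm sqr_sqrtr // dotv_ge0. Qed.
Lemma enorm_ge0 v : 0 <= enorm v.
Proof. exact: sqrtr_ge0. Qed.
Lemma enormZ (a : R) v : enorm (a *: v) = `|a| * enorm v.
Proof. by rewrite /enorm dotvZl dotvZr mulrA -expr2 sqrtrM ?sqr_ge0 // sqrtr_sqr. Qed.
Lemma enormN v : enorm (- v) = enorm v.
Proof. by rewrite -scaleN1r enormZ normrN normr1 mul1r. Qed.

Lemma entry_le_mx v i : `|v ord0 i| <= `|v|.
Proof.
rewrite [leRHS]/Num.Def.normr /= mx_normrE; apply/bigmax_geP; right => /=.
by exists (ord0, i).
Qed.

Lemma entry_le_enorm v i : `|v ord0 i| <= enorm v.
Proof.
rewrite /enorm -sqrtr_sqr ler_sqrt ?dotv_ge0 //.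
rewrite /dotv (bigD1 i) //= -expr2 lerDl.
by apply: sumr_ge0 => j _; rewrite -expr2 sqr_ge0.
Qed.

Lemma mx_le_enorm v : `|v| <= enorm v.
Proof.
rewrite [leLHS]/Num.Def.normr /= mx_normrE; apply: bigmax_le; first exact: enorm_ge0.
by move=> [a j] _ /=; rewrite (ord1 a); exact: entry_le_enorm.
Qed.

Lemma dot_bound u v : `|dotv u v| <= n%:R * (`|u| * `|v|).
Proof.
apply: le_trans (ler_norm_sum _ _ _) _.
rewrite -[X in X <= _]mulr1.
have -> : n%:R * (`|u| * `|v|) = \sum_(i < n) (`|u| * `|v|).
  by rewrite sumr_const card_ord mulr_natl.
rewrite mulr1; apply: ler_sum => i _.
by rewrite normrM ler_pM ?entry_le_mx.
Qed.

End Helpers.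



Section Helpers2.
Context {R : realType} {n : nat}.
Local Notation V := 'rV[R]_n.
Implicit Types (u v w : V).

Lemma entry_cvg {T} (F : set_system T) {FF : Filter F} (a : T -> V) (x : V) i :
  a @ F --> x -> (fun k => a k ord0 i) @ F --> x ord0 i.
Proof.
move=> /cvgrPdist_lt ax; apply/cvgrPdist_lt => e e0.
apply: filterS (ax e e0) => k; apply: le_lt_trans.
by have := entry_le_mx (x - a k) i; rewrite !mxE.
Qed.

Lemma dotv_cvg {T} (F : set_system T) {FF : Filter F} (a b : T -> V) (x y : V) :
  a @ F --> x -> b @ F --> y -> (fun k => dotv (a k) (b k)) @ F --> dotv x y.
Proof.
move=> ax bx; rewrite /dotv.
apply: cvg_big => //; first exact: add_continuous.
move=> i _; apply: cvgM; exact: entry_cvg.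
Qed.

End Helpers2.



Section Helpers3.
Context {R : realType} {n : nat}.
Local Notation V := 'rV[R]_n.
Implicit Types (u v w : V).

Lemma Q_expand (ys c : V) (t : R) (x y : V) :
  dotv ys (y - c) + t / 2 * enorm (y - c) ^+ 2 =
  dotv ys (x - c) + t / 2 * enorm (x - c) ^+ 2 +
  dotv (ys + t *: (x - c)) (y - x) + t / 2 * enorm (y - x) ^+ 2.
Proof.
rewrite !enorm_sq.
have -> : y - c = (x - c) + (y - x) by apply/rowP => i; rewrite !mxE; ring.
move: (x - c) (y - x) => a h.
rewrite !dotvDr !dotvDl dotvZl (dotvC h a); field => //.
Qed.

Lemma frechet_tilt (g : V -> \bar R) ys c t x xs :
  frechet_subdiff g x xs ->
  frechet_subdiff (tilt g ys c t) x (xs + (ys + t *: (x - c))).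
Proof.
case=> gfin H; split; first by rewrite /tilt fin_numD gfin.
move=> e e0; have e20 : 0 < e / 2 by rewrite divr_gt0.
have t1 : 0 < `|t| + 1 by rewrite ltr_wpDl.
have [d d0 Hd] := H _ e20.
exists (Num.min d (e / (`|t| + 1))); first by rewrite lt_min d0 divr_gt0.
move=> y /andP[Np]; rewrite lt_min => /andP[Nd Nt].
have Hd' := Hd y (introT andP (conj Np Nd)).
rewrite /tilt -(fineK gfin) -EFinD /=.
apply: le_trans (leeD2r _ Hd'); rewrite -EFinD lee_fin.
rewrite (Q_expand ys c t x y) dotvDl.
have tN : `|t| * enorm (y - x) <= e.
  rewrite ltr_pdivlMr // in Nt.
  apply: le_trans (ltW Nt); rewrite mulrC ler_wpM2l ?enorm_ge0 //.
  by rewrite lerDl.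
have tt : - `|t| <= t by have := ler_norm (- t); rewrite normrN; lra.
have N0 := enorm_ge0 (y - x).
set N := enorm (y - x) in tN N0 *.
nra.
Qed.

Lemma lim_tilt (g : V -> \bar R) ys c t x xs :
  lim_subdiff g x xs ->
  lim_subdiff (tilt g ys c t) x (xs + (ys + t *: (x - c))).
Proof.
case=> [xk [xks [cx cg cxs fr]]].
exists xk, (fun k => xks k + (ys + t *: (xk k - c))); split => //.
- rewrite /tilt; apply: cvgeD => //; first exact: fin_num_adde_defl.
  apply: cvg_EFin; first by near=> k.
  rewrite /comp /=.
  under eq_cvg do rewrite enorm_sq.
  rewrite enorm_sq.
  apply: cvgD; first by apply: dotv_cvg; [exact: cvg_cst | apply: cvgB => //; exact: cvg_cst].
  apply: cvgM; first exact: cvg_cst.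
  by apply: dotv_cvg; apply: cvgB => //; exact: cvg_cst.
- apply: cvgD => //; apply: cvgD; first exact: cvg_cst.
  apply: cvgZ; first exact: cvg_cst.
  by apply: cvgB => //; exact: cvg_cst.
- by move=> k; exact: frechet_tilt.
Unshelve. all: by end_near.
Qed.

Lemma tilt_tilt (g : V -> \bar R) ys c t : tilt (tilt g ys c t) (- ys) c (- t) = g.
Proof.
apply/funext => y; rewrite /tilt -addeA -EFinD.
rewrite dotvNl.
have -> : dotv ys (y - c) + t / 2 * enorm (y - c) ^+ 2 +
     (- dotv ys (y - c) + - t / 2 * enorm (y - c) ^+ 2) = 0 by ring.
by rewrite adde0.
Qed.


Lemma lim_untilt (g : V -> \bar R) ys c t x xs :
  lim_subdiff (tilt g ys c t) x xs ->
  lim_subdiff g x (xs - (ys + t *: (x - c))).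
Proof.
move=> H; have := @lim_tilt _ (- ys) c (- t) _ _ H; rewrite tilt_tilt.
by rewrite scaleNr -opprD.
Qed.

End Helpers3.



Section Helpers4.
Context {R : realType} {n : nat}.
Local Notation V := 'rV[R]_n.
Implicit Types (u v w : V).

Lemma subgrad (U : set V) (g : V -> \bar R) x z gs :
  convex_on U g -> (forall y, g y != -oo%E) -> U x -> U z ->
  frechet_subdiff g x gs ->
  ((fine (g x) + dotv gs (z - x))%:E <= g z)%E.
Proof.
move=> cvx gN Ux Uz [gfin H].
case Egz: (g z) => [r| |]; last 2 first.
- exact: leey.
- by have := gN z; rewrite Egz.
rewrite lee_fin.
have := enorm_ge0 (z - x); rewrite le0r => /orP[/eqP N0|Npos].
  have zx : z = x.
    apply/eqP; rewrite -subr_eq0 -normr_eq0 eq_le normr_ge0 andbT.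
    by rewrite -N0 mx_le_enorm.
  move: Egz; rewrite zx subrr dotv0r addr0 => ->; exact: lexx.
apply: (introT (ler_addgt0Pr _ _)) => e e0.
set N := enorm (z - x) in Npos *.
have eN : 0 < e / N by rewrite divr_gt0.
have [d d0 Hd] := H _ eN.
set l := Num.min (1/2) (d / (2 * N)).
have N2 : 0 < 2 * N by rewrite mulr_gt0.
have l0 : 0 < l by rewrite lt_min; apply/andP; split; [lra | exact: divr_gt0].
have l1 : l < 1 by rewrite gt_min; apply/orP; left; lra.
have lNd : l * N < d.
  apply: (@le_lt_trans _ _ (d / (2 * N) * N)).
    by rewrite ler_pM2r // ge_min lexx orbT.
  rewrite invfM mulrA -mulrA mulVf ?gt_eqF // mulr1; lra.
have yx : (l *: z + (1 - l) *: x) - x = l *: (z - x).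
  by apply/rowP => i; rewrite !mxE; ring.
have Ny : enorm ((l *: z + (1 - l) *: x) - x) = l * N.
  by rewrite yx enormZ ger0_norm // ltW.
have := Hd (l *: z + (1 - l) *: x).
rewrite Ny yx dotvZr mulr_gt0 //= lNd => /(_ isT) Hf.
have := cvx z x l Uz Ux; rewrite l0 l1 => /(_ isT) /=.
rewrite Egz -(fineK gfin) -!EFinM -EFinD => Hc.
have := le_trans Hf Hc; rewrite lee_fin.
set a := fine (g x); set b := dotv gs (z - x).
have -> : e / N * (l * N) = l * e.
  by field; rewrite gt_eqF.
move=> key.
have : l * (a + b) <= l * (r + e) by nra.
by rewrite ler_pM2l.
Qed.

End Helpers4.



Section Helpers5.
Context {R : realType} {n : nat}.
Local Notation V := 'rV[R]_n.
Implicit Types (u v w : V).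

Lemma ballnE (c : V) (r : R) y : ball c r y = (`|c - y| < r).
Proof. by rewrite -ball_normE. Qed.

Lemma convex_ball (c : V) (r : R) : convex_setv (ball c r).
Proof.
move=> x y l; rewrite !ballnE => hx hy /andP[l0 l1].
have -> : c - (l *: x + (1 - l) *: y) = l *: (c - x) + (1 - l) *: (c - y).
  by apply/rowP => i; rewrite !mxE; ring.
apply: le_lt_trans (ler_normD _ _) _.
rewrite !normrZ (ger0_norm l0) ger0_norm ?subr_ge0 //.
set a := `|c - x| in hx *; set b := `|c - y| in hy *.
have am : a <= Num.max a b by rewrite le_max lexx.
have bm : b <= Num.max a b by rewrite le_max lexx orbT.
have mr : Num.max a b < r by rewrite gt_max hx hy.
nra.
Qed.

Lemma convex_on_sub (U U' : set V) g : U' `<=` U -> convex_on U g -> convex_on U' g.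
Proof. by move=> sub cg x y l Ux Uy; apply: cg; apply: sub. Qed.

Lemma convex_ext (U : set V) g1 g2 : (forall x, g1 x = g2 x) ->
  convex_on U g1 -> convex_on U g2.
Proof. by move=> e cg x y l Ux Uy l01 /=; rewrite -!e; exact: cg. Qed.

Lemma convex_affine (U : set V) (G : V -> \bar R) (w : V) (k : R) :
  convex_on U G -> convex_on U (fun x => G x + (dotv w x + k)%:E)%E.
Proof.
move=> cG x y l Ux Uy l01 /=.
have H := cG x y l Ux Uy l01; move: H => /= H.
rewrite muleDr // ?fin_num_adde_defl // muleDr // ?fin_num_adde_defl //.
rewrite -!EFinM addeACA -EFinD.
have -> : dotv w (l *: x + (1 - l) *: y) + k =
  l * (dotv w x + k) + (1 - l) * (dotv w y + k).
  by rewrite dotvDr !dotvZr; ring.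
exact: leeD2r.
Qed.

Lemma q_cont (ys c : V) (t : R) x (eta : R) : 0 < eta ->
  exists2 d : R, 0 < d & forall y, enorm (y - x) < d ->
   `|(dotv ys (y - c) + t / 2 * enorm (y - c) ^+ 2) -
     (dotv ys (x - c) + t / 2 * enorm (x - c) ^+ 2)| < eta.
Proof.
move=> eta0.
set gr := ys + t *: (x - c).
set K := n%:R * `|gr| + `|t| + 1.
have K0 : 0 < K by rewrite /K ltr_wpDl // addr_ge0 // mulr_ge0.
exists (Num.min 1 (eta / K)); first by rewrite lt_min ltr01 divr_gt0.
move=> y; rewrite lt_min => /andP[N1 NK].
rewrite (Q_expand ys c t x y) (_ : forall a b d : R, a + b + d - a = b + d); last by move=> *; ring.
set N := enorm (y - x) in N1 NK *.
have N0 : 0 <= N by exact: enorm_ge0.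
have hD : `|dotv gr (y - x)| <= n%:R * `|gr| * N.
  apply: le_trans (dot_bound _ _) _; rewrite mulrA ler_wpM2l ?mulr_ge0 //.
  exact: mx_le_enorm.
have KN : K * N < eta by rewrite mulrC -ltr_pdivlMr.
have ht : `|t / 2 * N ^+ 2| <= `|t| * N.
  rewrite normrM normrX (ger0_norm N0) normrM (ger0_norm (_ : 0 <= 2^-1)) ?invr_ge0 //.
  have t0 : 0 <= `|t| by [].
  have h : N ^+ 2 <= N by rewrite expr2; nra.
  nra.
rewrite -/gr.
apply: le_lt_trans (ler_normD _ _) _.
have : 0 <= n%:R * `|gr| * N by rewrite !mulr_ge0.
move: KN; rewrite /K; nra.
Qed.

Lemma lsc_tilt (g : V -> \bar R) ys c t : lsc g -> lsc (tilt g ys c t).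
Proof.
move=> lg x a; rewrite /tilt.
set q := fun y => dotv ys (y - c) + t / 2 * enorm (y - c) ^+ 2.
rewrite -/(q x) => ha.
have [eta [eta0 hb]] : exists eta, 0 < eta /\ ((a - q x + eta)%:E < g x)%E.
  move: ha; case: (g x) => [r| |] //= ha.
  - rewrite -EFinD lte_fin in ha.
    exists ((r + q x - a) / 2); split; [lra | rewrite lte_fin; lra].
  - by exists 1; split; [exact: ltr01 | exact: ltey].
have [d1 d10 H1] := lg x _ hb.
have [d2 d20 H2] := q_cont ys c t x eta eta0.
exists (Num.min d1 d2); first by rewrite lt_min d10 d20.
move=> y; rewrite lt_min => /andP[y1 y2].
have := H1 y y1; have := H2 y y2; rewrite -/(q y) -/(q x).
case: (g y) => [r| |] //= hq hr; last by rewrite addye ?ltey.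
rewrite -EFinD lte_fin; rewrite lte_fin in hr.
have := ler_norm (q x - q y); rewrite distrC; lra.
Qed.

Lemma tilt00 (fh : V -> \bar R) (s : R) :
  tilt fh 0 0 (- s) = (fun y => fh y - (s / 2 * enorm y ^+ 2)%:E)%E.
Proof.
apply/funext => y; rewrite /tilt dotv0l !subr0 add0r -EFinN; congr (_ + _%:E).
ring.
Qed.

Lemma sublim (U : set V) (fh : V -> \bar R) (s : R) x xs xb fb :
  open U -> convex_on U (fun y => fh y - (s / 2 * enorm y ^+ 2)%:E)%E ->
  (forall y, fh y != -oo%E) -> U x -> U xb -> fh xb = fb%:E ->
  lim_subdiff fh x xs ->
  (fh x <= (fb - dotv xs (xb - x) - s / 2 * dotv (xb - x) (xb - x))%:E)%E.
Proof.
move=> oU cvx fN Ux Uxb fhb [xk [xks [cx cg cxs fr]]].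
have nU : \forall k \near \oo, U (xk k).
  exact: (cx U (open_nbhs_nbhs (conj oU Ux))).
apply: (lee_cvg_to cg (@cvg_EFin _ _ _ _
   (fun k => (fb - dotv (xks k) (xb - xk k) - s / 2 * dotv (xb - xk k) (xb - xk k))%:E) _ _ _)).
- by near=> k.
- rewrite /comp /=.
  apply: cvgB; first apply: cvgB; first exact: cvg_cst.
  + by apply: dotv_cvg => //; apply: cvgB => //; exact: cvg_cst.
  + apply: cvgM; first exact: cvg_cst.
    by apply: dotv_cvg; apply: cvgB => //; exact: cvg_cst.
- near=> k.
  have Uk : U (xk k) by near: k.
  have [fkfin _] := fr k.
  have := frechet_tilt fh 0 0 (- s) _ _ (fr k); rewrite tilt00 => frg.
  have gN : forall y, (fh y - (s / 2 * enorm y ^+ 2)%:E != -oo)%E.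
    by move=> y; move: (fN y); case: (fh y).
  have := subgrad _ _ _ _ _ cvx gN Uk Uxb frg.
  rewrite fhb -(fineK fkfin) -!EFinN -!EFinD /= !lee_fin.
  have := Q_expand 0 0 s (xk k) xb.
  rewrite !dotv0l !subr0 !add0r !enorm_sq.
  rewrite !dotvDl !dotvZl dotvNl.
  lra.
Unshelve. all: by end_near.
Qed.

End Helpers5.



Theorem lemma4p2 (R : realType) (n : nat) (s : R) (f : 'rV[R]_n -> \bar R)
    (xb xbs : 'rV[R]_n) :
  ext_fun f -> lsc f -> var_convex f s xb xbs ->
  (forall (t : R) (ys : 'rV[R]_n),
     var_convex (tilt f ys xb t) (s + t) xb (xbs + ys)) /\
  (forall (fh : 'rV[R]_n -> \bar R) (U W : set 'rV[R]_n) (rho : R),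
     certifies f s xb xbs fh U W rho ->
     forall (t : R) (ys : 'rV[R]_n),
       exists (Uh Wh : set 'rV[R]_n) (rhoh : R),
         certifies (tilt f ys xb t) (s + t) xb (xbs + ys)
                   (tilt fh ys xb t) Uh Wh rhoh).
Proof.
move=> fext flsc [fxb_lt limf [fh0 [U0 [W0 [rho0 cert0]]]]].
have fxfin : f xb \is a fin_num by rewrite fin_numE fext -ltey fxb_lt.
have enorm0 : enorm (0 : 'rV[R]_n) = 0 by rewrite /enorm dotv0l sqrtr0.
set fb := fine (f xb).
have Efb : f xb = fb%:E by rewrite /fb fineK.
have part2 : forall (fh : 'rV[R]_n -> \bar R) (U W : set 'rV[R]_n) (rho : R),
     certifies f s xb xbs fh U W rho ->
     forall (t : R) (ys : 'rV[R]_n),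
       exists (Uh Wh : set 'rV[R]_n) (rhoh : R),
         certifies (tilt f ys xb t) (s + t) xb (xbs + ys)
                   (tilt fh ys xb t) Uh Wh rhoh.
  move=> fh U W rho [[oU [cU Uxb]] [oW [cW Wxbs]] [efh lfh] fr [cvx fhle eqv eqf]] t ys.
  have fbr : fb < rho by rewrite -lte_fin -Efb.
  set d0 := (rho - fb) / 2.
  have hd0 : rho = fb + 2 * d0 by rewrite /d0; field.
  have d00 : 0 < d0 by rewrite /d0; lra.
  have fhxb : fh xb = f xb.
    apply/esym; exact: (eqf _ _ Uxb Wxbs limf fr ((eqv _ _ Uxb Wxbs).1 (conj limf fr))).
  have [r0 r00 Br0] : exists2 r0 : R, 0 < r0 & ball xb r0 `<=` U.
    by apply/nbhs_ballP; exact: oU.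
  have [eps eps0 Beps] : exists2 e : R, 0 < e & ball xbs e `<=` W.
    by apply/nbhs_ballP; exact: oW.
  set B := `|xbs + ys| + 1 + `|ys| + `|t|.
  have B0 : 0 <= B by rewrite /B !addr_ge0.
  set C := n%:R * (B + `|s| + `|ys| + `|t|) + 1.
  have C0 : 0 < C by rewrite /C ltr_wpDl // mulr_ge0 // !addr_ge0.
  have t1 : 0 < `|t| + 1 by rewrite ltr_wpDl.
  set r := Num.min (Num.min r0 1) (Num.min (eps / (2 * (`|t| + 1))) (d0 / C)).
  have rpos : 0 < r.
    rewrite /r !lt_min r00 ltr01 /=.
    by apply/andP; split; apply: divr_gt0 => //; rewrite mulr_gt0.
  have rr0 : r <= r0 by rewrite /r !ge_min lexx.
  have r1 : r <= 1 by rewrite /r !ge_min lexx !orbT.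
  have reps : r <= eps / (2 * (`|t| + 1)) by rewrite /r !ge_min lexx !orbT.
  have rC : r <= d0 / C by rewrite /r !ge_min lexx !orbT.
  set r2 := Num.min 1 (eps / 2).
  have r2pos : 0 < r2 by rewrite /r2 lt_min ltr01 divr_gt0.
  have r21 : r2 <= 1 by rewrite /r2 ge_min lexx.
  have r2e : r2 <= eps / 2 by rewrite /r2 ge_min lexx orbT.
  have Uh_U : ball xb r `<=` U by move=> y hy; apply: Br0; exact: (le_ball rr0 hy).
  have hbx : forall x, ball xb r x -> `|x - xb| < r by move=> x; rewrite ballnE (distrC xb x).
  have Wmap : forall x xs, ball xb r x -> ball (xbs + ys) r2 xs ->
      W (xs - (ys + t *: (x - xb))).
    move=> x xs /hbx hx; rewrite ballnE => hxs; apply: Beps; rewrite ballnE.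
    have -> : xbs - (xs - (ys + t *: (x - xb))) = (xbs + ys - xs) + t *: (x - xb).
      by apply/rowP => i; rewrite !mxE; ring.
    apply: le_lt_trans (ler_normD _ _) _; rewrite normrZ.
    have h1 : `|t| * `|x - xb| <= `|t| * (eps / (2 * (`|t| + 1))).
      by rewrite ler_wpM2l // ltW // (lt_le_trans hx reps).
    have h2 : `|t| * (eps / (2 * (`|t| + 1))) <= eps / 2.
      rewrite mulrA ler_pdivrMr ?mulr_gt0 //.
      have : 0 <= `|t| by []. nra.
    lra.
  have xsB : forall x xs, ball xb r x -> ball (xbs + ys) r2 xs ->
      `|xs - (ys + t *: (x - xb))| <= B.
    move=> x xs /hbx hx; rewrite ballnE => hxs.
    have e1 : `|xs| <= `|xbs + ys| + 1.
      have := ler_normB (xbs + ys) (xbs + ys - xs).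
      rewrite opprB addrC subrK; lra.
    have e2 : `|t *: (x - xb)| <= `|t|.
      rewrite normrZ; have : 0 <= `|t| by []. have : 0 <= `|x - xb| by []. nra.
    apply: le_trans (ler_normB _ _) _.
    apply: le_trans (lerD (lexx _) (ler_normD _ _)) _.
    rewrite /B; lra.
  have key : forall (xs' : 'rV[R]_n) x, ball xb r x -> `|xs'| <= B ->
      `|- dotv xs' (xb - x) - s / 2 * dotv (xb - x) (xb - x) +
        (dotv ys (x - xb) + t / 2 * enorm (x - xb) ^+ 2)| < d0 /\
      `|dotv ys (x - xb) + t / 2 * enorm (x - xb) ^+ 2| < d0.
    move=> xs' x /hbx hx hxs'.
    have -> : xb - x = - (x - xb) by rewrite opprB.
    rewrite dotvNr dotvNl dotvNr opprK enorm_sq.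
    move: (x - xb) hx => h hx.
    set M := `|h| in hx *.
    have M0 : 0 <= M by rewrite /M normr_ge0.
    set P := n%:R * M.
    have P0 : 0 <= P by rewrite mulr_ge0.
    have a1 : `|dotv xs' h| <= B * P.
      apply: le_trans (dot_bound _ _) _.
      have -> : B * P = n%:R * (B * M) by rewrite /P; ring.
      by rewrite ler_wpM2l // ler_wpM2r.
    have a2 : `|dotv h h| <= P.
      apply: le_trans (dot_bound _ _) _; rewrite /P ler_wpM2l //.
      have : M <= 1 by apply: ltW; apply: lt_le_trans hx r1.
      rewrite -/M; nra.
    have a3 : `|dotv ys h| <= `|ys| * P.
      apply: le_trans (dot_bound _ _) _.
      by have -> : `|ys| * P = n%:R * (`|ys| * M) by rewrite /P; ring.
    have a4 : forall u : R, `|u / 2 * dotv h h| <= `|u| * P.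
      move=> u; rewrite normrM normrM (ger0_norm (_ : 0 <= 2^-1)) ?invr_ge0 //.
      have : 0 <= `|u| by []. have : 0 <= `|dotv h h| by []. nra.
    have CM : C * M < d0.
      have : C * r <= d0 by rewrite mulrC -ler_pdivlMr.
      have : C * M < C * r by rewrite ltr_pM2l.
      lra.
    have idt : B * P + `|s| * P + `|ys| * P + `|t| * P = C * M - M.
      by rewrite /C /P; ring.
    have := a4 s; have := a4 t.
    move: a1 a2 a3 idt CM; clear a4; rewrite !ler_norml !ltr_norml.
    move=> /andP[a1 a1'] _ /andP[a3 a3'] idt CM /andP[a4 a4'] /andP[a5 a5'].
    split; apply/andP; split; lra.
  have qb : forall x, ball xb r x ->
      `|dotv ys (x - xb) + t / 2 * enorm (x - xb) ^+ 2| < d0.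
    by move=> x Ux; have [] := key 0 x Ux; rewrite ?normr0.
  have fx_lt : forall x, ball xb r x ->
      (tilt f ys xb t x < (fb + d0)%:E)%E -> (f x < rho%:E)%E.
    move=> x Ux; rewrite /tilt; have := qb x Ux.
    case Efx: (f x) => [v| |] //= hq.
    - rewrite -EFinD !lte_fin => h.
      move: hq; rewrite ltr_norml => /andP[h1 h2]; lra.
    - by have := fext x; rewrite Efx.
  exists (ball xb r), (ball (xbs + ys) r2), (fb + d0); split.
  - split; [exact: ball_open | split; [exact: convex_ball | exact: ballxx]].
  - split; [exact: ball_open | split; [exact: convex_ball | exact: ballxx]].
  - split; last exact: lsc_tilt.
    by move=> x; rewrite /tilt; move: (efh x); case: (fh x).
  - rewrite /tilt subrr dotv0r enorm0 expr0n /= mulr0 addr0 adde0 Efb lte_fin; lra.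
  split.
  - apply: (convex_ext _ _ _ _ (convex_affine _ _ (ys - t *: xb)
        (- dotv ys xb + t / 2 * dotv xb xb) (convex_on_sub _ _ _ Uh_U cvx))).
    move=> x /=; rewrite /tilt -!addeA -!EFinD; congr (_ + _%:E).
    rewrite !enorm_sq !dotvBl !dotvBr !dotvZl (dotvC x xb).
    by field => //.
  - by move=> x Ux; apply: leeD2r; apply: fhle; exact: Uh_U.
  - move=> x xs Ux Wxs.
    have W' := Wmap x xs Ux Wxs; have U' := Uh_U x Ux.
    have back : forall g, lim_subdiff g x (xs - (ys + t *: (x - xb))) ->
        lim_subdiff (tilt g ys xb t) x xs.
      by move=> g H; have := lim_tilt _ ys xb t _ _ H; rewrite subrK.
    split.
    + case=> Lf Lt; have Lf' := lim_untilt _ _ _ _ _ _ Lf.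
      apply: back; apply/(eqv x _ U' W').1; split => //; exact: fx_lt.
    + move=> Lh; have Lh' := lim_untilt _ _ _ _ _ _ Lh.
      have [Lf' fxr] := (eqv x _ U' W').2 Lh'.
      split; first exact: back.
      have fe : f x = fh x := eqf x _ U' W' Lf' fxr Lh'.
      have sl := sublim _ _ _ _ _ _ _ oU cvx efh U' Uxb (etrans fhxb Efb) Lh'.
      rewrite /tilt fe; apply: le_lt_trans (leeD2r _ sl) _.
      rewrite -EFinD lte_fin.
      have [+ _] := key _ x Ux (xsB x xs Ux Wxs).
      rewrite ltr_norml => /andP[_ h]; lra.
  - move=> x xs Ux Wxs Lf Lt Lh.
    have W' := Wmap x xs Ux Wxs; have U' := Uh_U x Ux.
    by rewrite /tilt (eqf x _ U' W' (lim_untilt _ _ _ _ _ _ Lf) (fx_lt x Ux Lt) (lim_untilt _ _ _ _ _ _ Lh)).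
split; last exact: part2.
move=> t ys; split.
- by rewrite /tilt subrr dotv0r enorm0 expr0n /= mulr0 addr0 adde0.
- by have := lim_tilt _ ys xb t _ _ limf; rewrite subrr scaler0 addr0.
- by have [Uh [Wh [rh ?]]] := part2 _ _ _ _ cert0 t ys; exists (tilt fh0 ys xb t), Uh, Wh, rh.
Qed.
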